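(* Let $P\subseteq\mathbb{R}^n$ be an $n$-dimensional lattice simplex, with vertices $v_0,\dots,v_n$, and let $a_i$ be the lattice distance of $v_i$ from the facet of $P$ not containing $v_i$. (1) If $\mu(P)>\frac{n+1}{2}$, or if $\mu(P)=\frac{n+1}{2}$ and $a_i\neq2$ for some $i$, then $P$ is a lattice pyramid. (2) If $\mu(P)\ge\frac{n+1}{2}$ and $P$ is not unimodularly equivalent to $2\Delta_n$, then $P$ has lattice width one.
   Context: Lattice distance from a facet $F=\{\langle c,x\rangle=b\}$ (with $c\in(\mathbb{Z}^n)^*$ primitive inner normal) is $d_F(y)=\langle c,y\rangle-b$; $d_P(y):=\min_F d_F(y)$ over facets, $P^{(s)}:=\{y:d_P(y)\ge s\}$, $\mu(P):=(\sup\{s>0:P^{(s)}\neq\emptyset\})^{-1}$. A lattice simplex is a lattice pyramid if some vertex has lattice distance $1$ from the opposite facet (i.e. $P$ is unimodularly equivalent to $\mathrm{conv}(Q\times\{0\},(0,\dots,0,1))$ for a lattice polytope $Q\subseteq\mathbb{R}^{n-1}$). $\Delta_n=\mathrm{conv}(0,e_1,\dots,e_n)$. The lattice width of $P$ is the minimum over nonzero $u\in(\mathbb{Z}^n)^*$ of $\max_{x\in P}\langle u,x\rangle-\min_{x\in P}\langle u,x\rangle$. Unimodular equivalence is via an affine lattice automorphism of $\mathbb{Z}^n$. *)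

(* Defs.v *)
From HB Require Import structures.
From mathcomp Require Import all_boot all_order all_algebra.
From mathcomp Require Import classical_sets reals.
Set Implicit Arguments. Unset Strict Implicit. Unset Printing Implicit Defensive.
Import Order.TTheory GRing.Theory Num.Theory.
Local Open Scope classical_set_scope.
Local Open Scope ring_scope.

Section LatticeSimplex.
Variables (R : realType) (n : nat).

Definition dotZ (c : 'rV[int]_n) (y : 'rV[R]_n) : R :=
  \sum_(k < n) (c 0 k)%:~R * y 0 k.

Definition primitive (c : 'rV[int]_n) : Prop :=
  forall d : int, (forall k, (d %| c ord0 k)%Z) -> `|d| = 1.

Definition vR (v : 'I_n.+1 -> 'rV[int]_n) (i : 'I_n.+1) : 'rV[R]_n :=
  map_mx (fun z : int => z%:~R) (v i).

Definition full_dim (v : 'I_n.+1 -> 'rV[int]_n) : Prop :=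
  \det (\matrix_(i < n, k < n) (v (lift ord0 i) 0 k - v ord0 0 k)) != 0.

Definition facet_normal (v : 'I_n.+1 -> 'rV[int]_n) (i : 'I_n.+1)
    (c : 'rV[int]_n) (b : int) : Prop :=
  [/\ primitive c,
      (forall j, j != i -> dotZ c (vR v j) = b%:~R) &
      b%:~R < dotZ c (vR v i)].

(* P^(s) = { y : d_P(y) >= s }, d_P = min over facets of lattice distance *)
Definition Pshrink (v : 'I_n.+1 -> 'rV[int]_n) (s : R) : set 'rV[R]_n :=
  [set y | forall i c b, facet_normal v i c b -> s <= dotZ c y - b%:~R].

Definition mu (v : 'I_n.+1 -> 'rV[int]_n) : R :=
  (sup [set s : R | 0 < s /\ Pshrink v s !=set0])^-1.

Definition vertex_dist_is (v : 'I_n.+1 -> 'rV[int]_n) (i : 'I_n.+1) (a : R) : Prop :=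
  forall c b, facet_normal v i c b -> dotZ c (vR v i) - b%:~R = a.

Definition lattice_pyramid (v : 'I_n.+1 -> 'rV[int]_n) : Prop :=
  exists i, vertex_dist_is v i 1.

Definition conv (v : 'I_n.+1 -> 'rV[int]_n) : set 'rV[R]_n :=
  [set y | exists l : 'I_n.+1 -> R,
     [/\ (forall i, 0 <= l i), \sum_i l i = 1 & y = \sum_i l i *: vR v i]].

Definition two_delta : 'I_n.+1 -> 'rV[int]_n :=
  fun i => \row_(k < n) (if i == lift ord0 k then 2 else 0).

Definition unimod_equiv (P Q : set 'rV[R]_n) : Prop :=
  exists (U : 'M[int]_n) (t : 'rV[int]_n),
    (\det U = 1 \/ \det U = -1) /\
    [set y *m map_mx (fun z : int => z%:~R) U + map_mx (fun z : int => z%:~R) t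
       | y in P] = Q.

Definition width_dir (P : set 'rV[R]_n) (u : 'rV[int]_n) : R :=
  sup [set dotZ u x | x in P] - inf [set dotZ u x | x in P].

Definition lattice_width_one (P : set 'rV[R]_n) : Prop :=
  (exists u, u != 0 /\ width_dir P u = 1) /\
  (forall u, u != 0 -> 1 <= width_dir P u).

End LatticeSimplex.

(* Main.v *)
Require Import Defs.
From HB Require Import structures.
From mathcomp Require Import all_boot all_order all_algebra.
From mathcomp Require Import classical_sets reals boolp.
From mathcomp Require Import zify ring lra.
Import Order.TTheory GRing.Theory Num.Theory.
Local Open Scope classical_set_scope.
Local Open Scope ring_scope.
Set Implicit Arguments. Unset Strict Implicit. Unset Printing Implicit Defensive.

Definition dotI (n : nat) (c x : 'rV[int]_n) : int := \sum_(k < n) c 0 k * x 0 k.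
Definition dotR (R : realType) (n : nat) (L y : 'rV[R]_n) : R := \sum_(k < n) L 0 k * y 0 k.
Definition Emx (n : nat) (v : 'I_n.+1 -> 'rV[int]_n) : 'M[int]_n :=
  \matrix_(i < n, k < n) (v (lift ord0 i) 0 k - v ord0 0 k).
Definition mapR (R : realType) {m n : nat} (A : 'M[int]_(m, n)) : 'M[R]_(m,n) :=
  map_mx (fun z : int => z%:~R) A.

Lemma dotZ_dotR (R : realType) n (c : 'rV[int]_n) (y : 'rV[R]_n) :
  dotZ c y = dotR (mapR R c) y.
Proof. by rewrite /dotZ /dotR; apply: eq_bigr => k _; rewrite mxE. Qed.

Lemma dotZ_vR (R : realType) n (v : 'I_n.+1 -> 'rV[int]_n) c j :
  dotZ c (vR R v j) = (dotI c (v j))%:~R.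
Proof.
rewrite /dotZ /dotI rmorph_sum; apply: eq_bigr => k _.
by rewrite /vR mxE rmorphM.
Qed.

Lemma dotR_sumr (R : realType) n (I : finType) (L : 'rV[R]_n) (l : I -> R) (x : I -> 'rV[R]_n) :
  dotR L (\sum_i l i *: x i) = \sum_i l i * dotR L (x i).
Proof.
rewrite /dotR.
under eq_bigr => k _ do rewrite summxE mulr_sumr.
rewrite exchange_big; apply: eq_bigr => i _; rewrite mulr_sumr.
by apply: eq_bigr => k _; rewrite mxE mulrCA.
Qed.

Lemma dotR_suml (R : realType) n (I : finType) (l : I -> R) (L : I -> 'rV[R]_n) (y : 'rV[R]_n) :
  dotR (\sum_i l i *: L i) y = \sum_i l i * dotR (L i) y.
Proof.
rewrite /dotR.
under eq_bigr => k _ do rewrite summxE mulr_suml.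
rewrite exchange_big; apply: eq_bigr => i _; rewrite mulr_sumr.
by apply: eq_bigr => k _; rewrite mxE mulrA.
Qed.

Lemma dotR0 (R : realType) n (y : 'rV[R]_n) : dotR 0 y = 0.
Proof. by rewrite /dotR big1 // => k _; rewrite mxE mul0r. Qed.

Lemma dotI_E (n : nat) (v : 'I_n.+1 -> 'rV[int]_n) c i :
  dotI c (v (lift ord0 i)) - dotI c (v ord0) = \sum_k Emx v i k * c 0 k.
Proof.
rewrite /dotI -sumrB; apply: eq_bigr => k _; rewrite mxE; ring.
Qed.

Lemma dotR_E (R : realType) (n : nat) (v : 'I_n.+1 -> 'rV[int]_n) (L : 'rV[R]_n) i :
  dotR L (vR R v (lift ord0 i)) - dotR L (vR R v ord0) = \sum_k (Emx v i k)%:~R * L 0 k.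
Proof.
rewrite /dotR -sumrB; apply: eq_bigr => k _; rewrite !mxE intrB; ring.
Qed.

Lemma aff0 (R : realType) n (v : 'I_n.+1 -> 'rV[int]_n) (L : 'rV[R]_n) (kap : R) :
  full_dim v -> (forall j, dotR L (vR R v j) + kap = 0) -> L = 0.
Proof.
move=> fd h.
have EL : mapR R (Emx v) *m L^T = 0.
  apply/matrixP => i j; rewrite !mxE (ord1 j).
  transitivity (dotR L (vR R v (lift ord0 i)) - dotR L (vR R v ord0)).
    by rewrite dotR_E; apply: eq_bigr => k _; rewrite !mxE.
  have h1 := h (lift ord0 i); have h0 := h ord0; lra.
have U : mapR R (Emx v) \in unitmx.
  rewrite unitmxE /mapR det_map_mx unitfE intr_eq0; exact: fd.
have : L^T = 0 by rewrite -(mulKmx U L^T) EL mulmx0.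
by move/(congr1 trmx); rewrite trmxK trmx0.
Qed.

Lemma aff0' (R : realType) n (v : 'I_n.+1 -> 'rV[int]_n) (L : 'rV[R]_n) (kap : R) :
  full_dim v -> (forall j, dotR L (vR R v j) + kap = 0) -> forall y, dotR L y + kap = 0.
Proof.
move=> fd h y; have L0 := aff0 fd h.
have := h ord0; by rewrite L0 !dotR0.
Qed.

Lemma fnE (R : realType) n (v : 'I_n.+1 -> 'rV[int]_n) i c b :
  facet_normal R v i c b <->
  [/\ primitive c, (forall j, j != i -> dotI c (v j) = b) & b < dotI c (v i)].
Proof.
rewrite /facet_normal; split=> -[p h1 h2]; split=> //.
- by move=> j /h1; rewrite dotZ_vR => /intr_inj.
- by move: h2; rewrite dotZ_vR ltr_int.
- by move=> j /h1 <-; rewrite dotZ_vR.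
- by rewrite dotZ_vR ltr_int.
Qed.

Lemma mk_normal_pos (R : realType) n (v : 'I_n.+1 -> 'rV[int]_n) i (c0 : 'rV[int]_n) (bt dl : int) j0 :
  j0 != i -> (forall j, j != i -> dotI c0 (v j) = bt) -> dotI c0 (v i) = bt + dl -> 0 < dl ->
  exists c b, facet_normal R v i c b.
Proof.
move=> j0i hb hi dl0.
pose g := \big[gcdn/0%N]_k `|c0 ord0 k|%N.
have gd : forall k, (g%:Z %| c0 ord0 k)%Z.
  by move=> k; rewrite dvdzE /=; apply: (biggcdn_inf k).
have g0 : (0 < g)%N.
  rewrite lt0n; apply/negP => /eqP g0.
  have c00 : forall k, c0 ord0 k = 0.
    by move=> k; have := gd k; rewrite g0 dvdzE /= dvd0n absz_eq0 => /eqP.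
  have : dotI c0 (v i) = dotI c0 (v j0).
    by rewrite /dotI !big1 // => k _; rewrite c00 mul0r.
  rewrite hi hb //; lia.
pose c1 : 'rV[int]_n := \row_k (c0 ord0 k %/ g%:Z)%Z.
have c1E : forall k, c1 ord0 k * g%:Z = c0 ord0 k by move=> k; rewrite mxE divzK.
have dE : forall x, dotI c1 x * g%:Z = dotI c0 x.
  move=> x; rewrite /dotI mulr_suml; apply: eq_bigr => k _.
  by rewrite -c1E; ring.
exists c1, (dotI c1 (v j0)); apply/fnE; split.
- move=> d hd; have h : (`|d| * g %| g)%N.
    rewrite {2}/g; apply/dvdn_biggcdP => k _.
    by have := dvdz_mul (hd k) (dvdzz g%:Z); rewrite c1E dvdzE abszM.
  have : (`|d| * g %| 1 * g)%N by rewrite mul1n.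
  rewrite dvdn_pmul2r // dvdn1 => /eqP h1; lia.
- move=> j ji; have gn0 : g%:Z != 0 by lia.
  by apply: (mulIf gn0); rewrite !dE !hb.
- rewrite -(ltr_pM2r (x:=g%:Z)); last by rewrite ltz_nat.
  by rewrite !dE hi hb //; lia.
Qed.

Lemma dotIN n (c x : 'rV[int]_n) : dotI (- c) x = - dotI c x.
Proof. by rewrite /dotI -sumrN; apply: eq_bigr => k _; rewrite mxE mulNr. Qed.

Lemma mk_normal (R : realType) n (v : 'I_n.+1 -> 'rV[int]_n) i (c0 : 'rV[int]_n) (bt dl : int) j0 :
  j0 != i -> (forall j, j != i -> dotI c0 (v j) = bt) -> dotI c0 (v i) = bt + dl -> dl != 0 ->
  exists c b, facet_normal R v i c b.
Proof.
move=> j0i hb hi dln0; have [dl0|dl0] : dl < 0 \/ 0 < dl.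
  by case: (ltrgtP dl 0) => h; [left|right|rewrite h eqxx in dln0].
2: exact: (@mk_normal_pos R n v i c0 bt dl j0 j0i hb hi dl0).
apply: (@mk_normal_pos R n v i (- c0) (- bt) (- dl) j0 j0i).
- by move=> j ji; rewrite dotIN hb.
- by rewrite dotIN hi opprD.
- by rewrite oppr_gt0.
Qed.

Lemma normal_exists (R : realType) n (v : 'I_n.+1 -> 'rV[int]_n) i :
  (0 < n)%N -> full_dim v -> exists c b, facet_normal R v i c b.
Proof.
move=> n0 fd.
have fd' : \det (Emx v) != 0 by exact: fd.
pose A := \adj (Emx v).
have EA : forall i' j, \sum_k Emx v i' k * A k j = \det (Emx v) *+ (i' == j).
  by move=> i' j; have := congr1 (fun M : 'M[int]_n => M i' j) (mul_mx_adj (Emx v)); rewrite !mxE.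
have j0i' : forall h : 'I_n.+1, lift h (Ordinal n0) != h by move=> h; rewrite eq_sym neq_lift.
case: (unliftP ord0 i) => [j ->|->].
- pose c0 : 'rV[int]_n := \row_k A k j.
  apply: (@mk_normal R n v _ c0 (dotI c0 (v ord0)) (\det (Emx v)) _ (j0i' _)) => //.
  + move=> x; case: (unliftP ord0 x) => [i' ->|->] // ne.
    have := dotI_E v c0 i'; rewrite (eq_bigr (fun k => Emx v i' k * A k j)); last first.
      by move=> k _; rewrite /c0 [X in _ * X = _]mxE.
    rewrite (EA i' j); have -> : (i' == j) = false.
      by apply/negbTE; apply: contraNneq ne => ->.
    by rewrite mulr0n => /eqP; rewrite subr_eq0 => /eqP.
  + have := dotI_E v c0 j; rewrite (eq_bigr (fun k => Emx v j k * A k j)); last first.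
      by move=> k _; rewrite /c0 [X in _ * X = _]mxE.
    rewrite (EA j j) eqxx mulr1n => <-; ring.
- pose c0 : 'rV[int]_n := \row_k - \sum_j A k j.
  apply: (@mk_normal R n v _ c0 (dotI c0 (v ord0) - \det (Emx v)) (\det (Emx v)) _ (j0i' _)) => //.
  + move=> x; case: (unliftP ord0 x) => [i' ->|->] // _.
    have := dotI_E v c0 i'.
    rewrite (eq_bigr (fun k => - \sum_j Emx v i' k * A k j)); last first.
      by move=> k _; rewrite /c0 [X in _ * X = _]mxE mulrN mulr_sumr.
    rewrite sumrN exchange_big /= (eq_bigr (fun j => \det (Emx v) *+ (i' == j))); last first.
      by move=> j _; rewrite EA.
    rewrite (bigD1 i') //= eqxx big1 => [|j /negbTE]; last by rewrite eq_sym => ->.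
    rewrite mulr1n addr0 => /eqP; rewrite subr_eq => /eqP ->.
    by rewrite addrC.
  + by rewrite subrK.
Qed.

Lemma dotI_lin n (p q : int) (c c' x : 'rV[int]_n) :
  dotI (p *: c' - q *: c) x = p * dotI c' x - q * dotI c x.
Proof.
rewrite /dotI !mulr_sumr -sumrB; apply: eq_bigr => k _; rewrite !mxE; ring.
Qed.

Lemma dotR_map (R : realType) n (v : 'I_n.+1 -> 'rV[int]_n) (c : 'rV[int]_n) j :
  dotR (mapR R c) (vR R v j) = (dotI c (v j))%:~R.
Proof. by rewrite -dotZ_dotR dotZ_vR. Qed.

Lemma gcd_arg n (a a' : int) (c c' : 'rV[int]_n) :
  0 < a -> 0 < a' -> primitive c -> primitive c' ->
  (forall k, a * c' ord0 k = a' * c ord0 k) -> a = a'.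
Proof.
move=> a0 a'0 pc pc' h.
pose g := gcdz a a'.
have g0 : 0 < g.
  by rewrite /g /gcdz ltz_nat gcdn_gt0 absz_gt0 gt_eqF.
have gE : a = (a %/ g)%Z * g by rewrite divzK // dvdz_gcdl.
have gE' : a' = (a' %/ g)%Z * g by rewrite divzK // dvdz_gcdr.
set p := (a %/ g)%Z in gE; set q := (a' %/ g)%Z in gE'.
have cop : coprimez p q.
  have : gcdz p q * `|g|%:Z = g by rewrite mulz_gcdl -gE -gE'.
  rewrite gtz0_abs // => /eqP; rewrite -{2}[g]mul1r (inj_eq (mulIf _)); last first.
    by rewrite gt_eqF.
  by [].
have h' : forall k, p * c' ord0 k = q * c ord0 k.
  move=> k; apply: (mulIf (x:=g)); first by rewrite gt_eqF.
  by rewrite mulrAC -gE mulrAC -gE' h.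
have p1 : `|p| = 1.
  apply: pc => k; rewrite -(Gauss_dvdzr _ cop) -h'; exact: dvdz_mulr (dvdzz _).
have q1 : `|q| = 1.
  apply: pc' => k; rewrite coprimez_sym in cop; rewrite -(Gauss_dvdzr _ cop) h';
  exact: dvdz_mulr (dvdzz _).
have pp : 0 < p by move: a0; rewrite gE pmulr_lgt0.
have qp : 0 < q by move: a'0; rewrite gE' pmulr_lgt0.
rewrite gE gE'; congr (_ * _); lia.
Qed.

Lemma normal_unique (R : realType) n (v : 'I_n.+1 -> 'rV[int]_n) i c b c' b' :
  (0 < n)%N -> full_dim v -> facet_normal R v i c b -> facet_normal R v i c' b' ->
  c' = c /\ b' = b.
Proof.
move=> n0 fd /fnE [pc hc hci] /fnE [pc' hc' hci'].
pose a := dotI c (v i) - b; pose a' := dotI c' (v i) - b'.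
have a0 : 0 < a by rewrite subr_gt0.
have a'0 : 0 < a' by rewrite subr_gt0.
pose M := a *: c' - a' *: c.
have M0 : mapR R M = 0.
  apply: (@aff0 R n v _ (- (a * b' - a' * b)%:~R) fd) => j.
  rewrite dotR_map dotI_lin -rmorphN -rmorphD; apply/eqP; rewrite intr_eq0; apply/eqP.
  have [->|ji] := eqVneq j i.
    rewrite /a /a'; ring.
  rewrite hc // hc' //; ring.
have M0' : M = 0.
  apply/matrixP => x k; have := congr1 (fun X : 'rV[R]_n => X x k) M0.
  by rewrite !mxE => /eqP; rewrite intr_eq0 => /eqP.
have hk : forall k, a * c' ord0 k = a' * c ord0 k.
  move=> k; have := congr1 (fun X : 'rV[int]_n => X ord0 k) M0'.
  by rewrite !mxE => /eqP; rewrite subr_eq0 => /eqP.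
have aa := gcd_arg a0 a'0 pc pc' hk.
have cc : c' = c.
  apply/matrixP => x k; rewrite (ord1 x); apply: (mulfI (x:=a)); first by rewrite gt_eqF.
  by rewrite hk aa.
split=> //.
have j0i : lift i (Ordinal n0) != i by rewrite eq_sym neq_lift.
by rewrite -(hc _ j0i) -(hc' _ j0i) cc.
Qed.

Lemma sup_eq_max (R : realType) (E : set R) x : E x -> (forall y, E y -> y <= x) -> sup E = x.
Proof.
move=> Ex ub; apply/le_anti/andP; split.
  by apply: ge_sup; [exists x | move=> y /ub].
by apply: ub_le_sup => //; exists x => y /ub.
Qed.

Lemma inf_eq_min (R : realType) (E : set R) x : E x -> (forall y, E y -> x <= y) -> inf E = x.
Proof.
move=> Ex lb; apply/le_anti/andP; split.
  by apply: ge_inf => //; exists x => y /lb.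
by apply: lb_le_inf; [exists x | move=> y /lb].
Qed.

Definition Aof n (v : 'I_n.+1 -> 'rV[int]_n) (N : 'I_n.+1 -> 'rV[int]_n * int) i : int :=
  dotI (N i).1 (v i) - (N i).2.

Lemma bary_id (R : realType) n (v : 'I_n.+1 -> 'rV[int]_n) N :
  full_dim v -> (forall i, facet_normal R v i (N i).1 (N i).2) ->
  forall y : 'rV[R]_n, \sum_i (dotZ (N i).1 y - ((N i).2)%:~R) / (Aof v N i)%:~R = 1.
Proof.
move=> fd hN.
have Apos : forall i, 0 < Aof v N i by move=> i; have /fnE [_ _ h] := hN i; rewrite subr_gt0.
pose L := \sum_i ((Aof v N i)%:~R)^-1 *: mapR R (N i).1.
pose s0 := \sum_i ((N i).2)%:~R / (Aof v N i)%:~R : R.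
have key : forall y, \sum_i (dotZ (N i).1 y - ((N i).2)%:~R) / (Aof v N i)%:~R = dotR L y - s0.
  move=> y; rewrite /L dotR_suml /s0 -sumrB; apply: eq_bigr => i _.
  by rewrite dotZ_dotR mulrBl mulrC.
have vert : forall j, \sum_i (dotZ (N i).1 (vR R v j) - ((N i).2)%:~R) / (Aof v N i)%:~R = 1.
  move=> j; rewrite (bigD1 j) //= big1 ?addr0.
    rewrite dotZ_vR -intrB /Aof divff // intr_eq0 gt_eqF //; exact: Apos.
  move=> i ij; have /fnE [_ h _] := hN i.
  by rewrite dotZ_vR h 1?eq_sym // subrr mul0r.
move=> y.
have := @aff0' R n v L (- s0 - 1) fd.
have H : forall j, dotR L (vR R v j) + (- s0 - 1) = 0.
  move=> j; have := vert j; rewrite key => h; rewrite addrA h; ring.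
move=> /(_ H y) => h; rewrite key; lra.
Qed.

Lemma dotZ_comb (R : realType) n (v : 'I_n.+1 -> 'rV[int]_n) (c : 'rV[int]_n) (l : 'I_n.+1 -> R) (b : R) :
  \sum_i l i = 1 ->
  dotZ c (\sum_i l i *: vR R v i) - b = \sum_i l i * ((dotI c (v i))%:~R - b).
Proof.
move=> l1; rewrite dotZ_dotR dotR_sumr.
rewrite (eq_bigr (fun i => l i * (dotI c (v i))%:~R)); last by move=> i _; rewrite dotR_map.
rewrite -{1}[b]mul1r -l1 mulr_suml -sumrB; apply: eq_bigr => i _; ring.
Qed.

Lemma mu_formula (R : realType) n (v : 'I_n.+1 -> 'rV[int]_n) N :
  (0 < n)%N -> full_dim v -> (forall i, facet_normal R v i (N i).1 (N i).2) ->
  mu R v = \sum_i ((Aof v N i)%:~R)^-1.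
Proof.
move=> n0 fd hN.
have Apos : forall i, 0 < Aof v N i by move=> i; have /fnE [_ _ h] := hN i; rewrite subr_gt0.
have ApR : forall i, 0 < (Aof v N i)%:~R :> R by move=> i; rewrite ltr0z.
pose T := \sum_i ((Aof v N i)%:~R : R)^-1.
have T0 : 0 < T.
  rewrite /T (bigD1 ord0) //=; apply: ltr_wpDr.
    by apply: sumr_ge0 => i _; rewrite invr_ge0 ltW.
  by rewrite invr_gt0.
rewrite /mu -/T -[RHS]invrK; congr GRing.inv; apply: sup_eq_max.
- split; first by rewrite invr_gt0.
  exists (\sum_i (T^-1 / (Aof v N i)%:~R) *: vR R v i) => i c b hcb.
  have [-> ->] := normal_unique n0 fd (hN i) hcb.
  have l1 : \sum_i T^-1 / (Aof v N i)%:~R = 1 by rewrite -mulr_sumr mulVf // gt_eqF.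
  rewrite dotZ_comb // (bigD1 i) //= big1 ?addr0.
    by rewrite -intrB -/(Aof v N i) divfK ?gt_eqF.
  move=> j ji; have /fnE [_ h _] := hN i; by rewrite h // subrr mulr0.
- move=> s [s0 [y hy]].
  have le : s * T <= 1.
    rewrite -(bary_id fd hN y) /T mulr_sumr; apply: ler_sum => i _.
    by rewrite ler_pM2r ?invr_gt0 //; apply: hy.
  by rewrite -(ler_pM2r T0) mulVf ?gt_eqF.
Qed.

Lemma conv_vals (R : realType) n (v : 'I_n.+1 -> 'rV[int]_n) (u : 'rV[int]_n) x :
  conv (R:=R) v x -> exists l : 'I_n.+1 -> R,
    [/\ forall i, 0 <= l i, \sum_i l i = 1 & dotZ u x = \sum_i l i * (dotI u (v i))%:~R].
Proof.
move=> [l [l0 l1 ->]]; exists l; split=> //.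
by rewrite -[LHS]subr0 dotZ_comb //; apply: eq_bigr => i _; rewrite subr0.
Qed.

Lemma conv_bounds (R : realType) n (v : 'I_n.+1 -> 'rV[int]_n) (u : 'rV[int]_n) x (m M : R) :
  conv (R:=R) v x -> (forall j, m <= (dotI u (v j))%:~R <= M) -> m <= dotZ u x <= M.
Proof.
move=> /(conv_vals u) [l [l0 l1 ->]] hb; apply/andP; split.
  have -> : m = \sum_i l i * m by rewrite -mulr_suml l1 mul1r.
  by apply: ler_sum => i _; rewrite ler_wpM2l //; case/andP: (hb i).
have -> : M = \sum_i l i * M by rewrite -mulr_suml l1 mul1r.
by apply: ler_sum => i _; rewrite ler_wpM2l //; case/andP: (hb i).
Qed.

Lemma vert_conv (R : realType) n (v : 'I_n.+1 -> 'rV[int]_n) j : conv (R:=R) v (vR R v j).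
Proof.
exists (fun i => (i == j)%:R); split.
- by move=> i; rewrite ler0n.
- by rewrite (bigD1 j) //= eqxx big1 ?addr0 // => i /negbTE ->.
- rewrite (bigD1 j) //= eqxx scale1r big1 ?addr0 // => i /negbTE ->; by rewrite scale0r.
Qed.

Lemma img_bounds (R : realType) n (v : 'I_n.+1 -> 'rV[int]_n) (u : 'rV[int]_n) (m M : R) :
  (forall j, m <= (dotI u (v j))%:~R <= M) ->
  (forall y, [set dotZ u x | x in conv (R:=R) v] y -> m <= y <= M).
Proof. move=> hb y [x cx <-]; exact: (conv_bounds cx hb). Qed.

Lemma width_one_dir (R : realType) n (v : 'I_n.+1 -> 'rV[int]_n) (u : 'rV[int]_n) (t : int) :
  (forall j, t <= dotI u (v j) <= t + 1) -> (exists j, dotI u (v j) = t) ->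
  (exists j, dotI u (v j) = t + 1) -> width_dir (conv (R:=R) v) u = 1.
Proof.
move=> hb [j1 h1] [j2 h2].
have hb' : forall j, (t%:~R : R) <= ((dotI u (v j))%:~R : R) <= ((t + 1)%:~R : R).
  by move=> j; rewrite !ler_int.
rewrite /width_dir (@sup_eq_max _ _ (t + 1)%:~R) ?(@inf_eq_min _ _ t%:~R).
- by rewrite intrD addrAC subrr add0r.
- by exists (vR R v j1); [exact: vert_conv | rewrite dotZ_vR h1].
- by move=> y /(img_bounds hb') /andP [].
- by exists (vR R v j2); [exact: vert_conv | rewrite dotZ_vR h2].
- by move=> y /(img_bounds hb') /andP [].
Qed.

Lemma width_ge1 (R : realType) n (v : 'I_n.+1 -> 'rV[int]_n) (u : 'rV[int]_n) :
  full_dim v -> u != 0 -> 1 <= width_dir (conv (R:=R) v) u.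
Proof.
move=> fd un0.
have [j hj] : exists j, dotI u (v j) != dotI u (v ord0).
  case: (boolP [exists j, dotI u (v j) != dotI u (v ord0)]) => [/existsP //|/existsPn h].
  exfalso; move: un0; apply/negP; rewrite negbK.
  have : mapR R u = 0.
    apply: (@aff0 R n v _ (- (dotI u (v ord0))%:~R) fd) => j.
    by rewrite dotR_map; have := h j; rewrite negbK => /eqP ->; rewrite subrr.
  move=> M0; apply/eqP/matrixP => x k; have := congr1 (fun X : 'rV[R]_n => X x k) M0.
  by rewrite !mxE => /eqP; rewrite intr_eq0 => /eqP.
pose B := \sum_i `|dotI u (v i)|.
have bnd : forall j', ((- B)%:~R : R) <= ((dotI u (v j'))%:~R : R) <= (B%:~R : R).
  move=> j'; rewrite !ler_int -ler_norml /B (bigD1 j') //=.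
  by rewrite lerDl sumr_ge0.
pose S := [set dotZ u x | x in conv (R:=R) v].
have ubS : has_ubound S by exists B%:~R => y /(img_bounds bnd) /andP [].
have lbS : has_lbound S by exists (- B)%:~R => y /(img_bounds bnd) /andP [].
have inS : forall j', S (dotI u (v j'))%:~R.
  by move=> j'; rewrite /S; exists (vR R v j'); [exact: vert_conv | rewrite dotZ_vR].
have sj := ub_le_sup ubS (inS j); have s0 := ub_le_sup ubS (inS ord0).
have ij := ge_inf lbS (inS j); have i0 := ge_inf lbS (inS ord0).
rewrite /width_dir -/S.
have [lt|lt] : dotI u (v j) + 1 <= dotI u (v ord0) \/ dotI u (v ord0) + 1 <= dotI u (v j).
  by move: hj; lia.
- have : ((dotI u (v j))%:~R : R) + 1 <= (dotI u (v ord0))%:~R.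
    by rewrite -[1]/(1%:~R) -intrD ler_int.
  lra.
- have : ((dotI u (v ord0))%:~R : R) + 1 <= (dotI u (v j))%:~R.
    by rewrite -[1]/(1%:~R) -intrD ler_int.
  lra.
Qed.

Lemma F2_cases (x : 'F_2) : x = 0 \/ x = 1.
Proof. case: x => -[|[|m]] hm; [left|right|]; try exact/val_inj. by []. Qed.

Lemma F2_dvd (z : int) : (z%:~R : 'F_2) = 0 -> (2 %| z)%Z.
Proof. move=> h; rewrite (dvdz_pcharf (pchar_Fp (isT : prime 2))) h. done. Qed.

Lemma mapR_mul (R : realType) m n p (A : 'M[int]_(m, n)) (B : 'M[int]_(n, p)) :
  mapR R A *m mapR R B = mapR R (A *m B).
Proof. by rewrite /mapR map_mxM. Qed.

Lemma aff_comb (R : realType) n (I : finType) (l : I -> R) (x : I -> 'rV[R]_n) (M : 'M[R]_n) t :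
  \sum_i l i = 1 -> (\sum_i l i *: x i) *m M + t = \sum_i l i *: (x i *m M + t).
Proof.
move=> l1; under [RHS]eq_bigr => i _ do rewrite scalerDr.
rewrite mulmx_suml big_split /=; congr (_ + _).
  by apply: eq_bigr => i _; rewrite scalemxAl.
by rewrite -scaler_suml l1 scale1r.
Qed.

Lemma all2_case (R : realType) n (v : 'I_n.+1 -> 'rV[int]_n) N :
  (0 < n)%N -> full_dim v -> (forall i, facet_normal R v i (N i).1 (N i).2) ->
  (forall i, Aof v N i = 2) ->
  ~ unimod_equiv (conv (R:=R) v) (conv (R:=R) (@two_delta n)) ->
  exists (u : 'rV[int]_n) (t : int), [/\ u != 0, (forall j, t <= dotI u (v j) <= t + 1),
     (exists j, dotI u (v j) = t) & (exists j, dotI u (v j) = t + 1)].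
Proof.
move=> n0 fd hN A2 nU.
pose W : 'M[int]_n := \matrix_(k, j) (N (lift ord0 j)).1 ord0 k.
have dv : forall j x, dotI (N (lift ord0 j)).1 (v x) =
    (N (lift ord0 j)).2 + 2 *+ (x == lift ord0 j).
  move=> j x; have /fnE [_ hb _] := hN (lift ord0 j).
  have [->|xj] := eqVneq x (lift ord0 j).
    by rewrite mulr1n -(A2 (lift ord0 j)) /Aof addrC subrK.
  by rewrite mulr0n addr0 hb.
have EW : Emx v *m W = 2%:M.
  apply/matrixP => i j; rewrite !mxE.
  rewrite (eq_bigr (fun k => Emx v i k * (N (lift ord0 j)).1 ord0 k)); last first.
    by move=> k _; rewrite [W _ _]mxE.
  rewrite -dotI_E !dv (inj_eq lift_inj) eq_sym (negbTE (neq_lift _ _)) mulr0n addr0.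
  by rewrite addrC addKr.
have dets : \det (Emx v) * \det W = 2 ^+ n by rewrite -det_mulmx EW det_scalar.
pose W2 : 'M['F_2]_n := map_mx (fun z : int => z%:~R) W^T.
have [d0|dn0] := eqVneq (\det W2) 0.
  have [eps epsn0 epsW] : exists2 e : 'rV['F_2]_n, e != 0 & e *m W2 = 0 by apply/det0P/eqP.
  pose e (j : 'I_n) : int := if eps ord0 j == 0 then 0 else 1.
  have eE : forall j, eps ord0 j = (e j)%:~R.
    by move=> j; rewrite /e; case: (F2_cases (eps ord0 j)) => ->; rewrite ?eqxx ?oner_eq0.
  pose s (k : 'I_n) := \sum_j e j * W k j.
  have s2 : forall k, (2 %| s k)%Z.
    move=> k; apply: F2_dvd; transitivity ((eps *m W2) ord0 k); last by rewrite epsW mxE.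
    rewrite /s rmorph_sum !mxE; apply: eq_bigr => j _.
    by rewrite rmorphM /= -eE /W2 !mxE.
  pose u : 'rV[int]_n := \row_k ((s k) %/ 2)%Z.
  have du : forall i, dotI u (v (lift ord0 i)) - dotI u (v ord0) = e i.
    move=> i; apply: (mulIf (x:=2)) => //; rewrite dotI_E mulr_suml.
    rewrite (eq_bigr (fun k => Emx v i k * s k)); last first.
      by move=> k _; rewrite /u [X in _ * X * _]mxE -mulrA divzK.
    rewrite /s (eq_bigr (fun k => \sum_j e j * (Emx v i k * W k j))); last first.
      by move=> k _; rewrite mulr_sumr; apply: eq_bigr => j _; ring.
    rewrite exchange_big /=.
    rewrite (eq_bigr (fun j => e j * (2 *+ (i == j)))); last first.
      move=> j _; rewrite -mulr_sumr; congr (_ * _).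
      by have := congr1 (fun X : 'M[int]_n => X i j) EW; rewrite !mxE.
    rewrite (bigD1 i) //= eqxx mulr1n big1 ?addr0 //.
    by move=> j /negbTE; rewrite eq_sym => ->; rewrite mulr0n mulr0.
  have [i0 hi0] : exists i, e i = 1.
    case: (boolP [exists i, e i == 1]) => [/existsP [i /eqP] | /existsPn h]; first by exists i.
    exfalso; move/negP: epsn0; apply; apply/eqP/matrixP => x k; rewrite (ord1 x) eE mxE.
    by move: (h k); rewrite /e; case: (eps ord0 k == 0).
  have e01 : forall i, e i = 0 \/ e i = 1 by move=> i; rewrite /e; case: (_ == _); [left|right].
  exists u, (dotI u (v ord0)); split.
  - apply/negP => /eqP u0; have := du i0; rewrite hi0 u0 /dotI !big1 ?subrr //.
      by move=> k _; rewrite mxE mul0r.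
    by move=> k _; rewrite mxE mul0r.
  - move=> j; case: (unliftP ord0 j) => [i ->|->]; last by rewrite lexx /= lerDl.
    have := du i; case: (e01 i) => -> /eqP; rewrite subr_eq => /eqP ->.
      by rewrite add0r lexx lerDl.
    by rewrite addrC lexx lerDl.
  - by exists ord0.
  - by exists (lift ord0 i0); have := du i0; rewrite hi0 => /eqP; rewrite subr_eq => /eqP ->; rewrite addrC.
exfalso; apply: nU.
have odd2 : ~~ (2 %| \det W)%Z.
  apply/negP; rewrite (dvdz_pcharf (pchar_Fp (isT : prime 2))) => /eqP h.
  by move: dn0; rewrite /W2 det_map_mx /= det_tr h eqxx.
have detW : \det W = 1 \/ \det W = -1.
  have hd : (`|\det W| %| 2 ^ n)%N.
    have : (\det W %| 2 ^+ n)%Z by rewrite -dets dvdz_mull ?dvdzz.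
    by rewrite dvdzE abszX.
  have cp : coprime `|\det W| 2.
    by rewrite coprimen2; move: odd2; rewrite dvdzE /= dvdn2 negbK.
  have cp' := coprimeXr n cp.
  have : `|\det W|%N = 1%N.
    by move: cp'; rewrite /coprime; move/gcdn_idPl: hd => ->; move/eqP.
  lia.
have vimg : forall j, vR R v j *m mapR R W + mapR R (- (v ord0 *m W)) = vR R (@two_delta n) j.
  move=> j; rewrite -[vR R v j]/(mapR R (v j)) -[vR R _ j]/(mapR R (two_delta j)).
  rewrite mapR_mul /mapR -map_mxD; congr map_mx.
  rewrite -mulmxBl; apply/matrixP => x k; rewrite (ord1 x).
  case: (unliftP ord0 j) => [i ->|->].
    transitivity ((Emx v *m W) i k).
      by rewrite !mxE; apply: eq_bigr => l _; rewrite !mxE.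
    rewrite EW /two_delta !mxE (inj_eq lift_inj).
    by case: (i == k).
  rewrite subrr mul0mx /two_delta !mxE.
  by rewrite (negbTE (neq_lift _ _)).
exists W, (- (v ord0 *m W)); split => //.
apply/seteqP; split.
- move=> z [y [l [l0 l1 ->]] <-]; exists l; split => //.
  rewrite -[map_mx _ W]/(mapR R W) -[map_mx _ (- _)]/(mapR R (- (v ord0 *m W))).
  by rewrite aff_comb //; apply: eq_bigr => i _; rewrite vimg.
- move=> z [l [l0 l1 ->]]; exists (\sum_i l i *: vR R v i); first by exists l.
  rewrite -[map_mx _ W]/(mapR R W) -[map_mx _ (- _)]/(mapR R (- (v ord0 *m W))).
  by rewrite aff_comb //; apply: eq_bigr => i _; rewrite vimg.
Qed.

Lemma inv_le_half (R : realType) (z : int) : 2 <= z -> ((z%:~R : R)^-1) <= 2^-1.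
Proof.
move=> hz; have z0 : 0 < (z%:~R : R) by rewrite ltr0z; lia.
rewrite lef_pV2 ?posrE //; rewrite -[2 : R]/((2%:Z)%:~R) ler_int //.
Qed.

Lemma inv_lt_half (R : realType) (z : int) : 3 <= z -> ((z%:~R : R)^-1) < 2^-1.
Proof.
move=> hz; have z0 : 0 < (z%:~R : R) by rewrite ltr0z; lia.
rewrite ltf_pV2 ?posrE //; rewrite -[2 : R]/((2%:Z)%:~R) ltr_int //; lia.
Qed.

Lemma sum_half (R : realType) n (f : 'I_n.+1 -> R) :
  (forall i, f i <= 2^-1) -> \sum_i f i <= (n.+1)%:R / 2.
Proof.
move=> h; apply: (le_trans (ler_sum _ (fun i _ => h i))).
by rewrite sumr_const card_ord mulrC mulr_natr.
Qed.

Lemma sum_half_lt (R : realType) n (f : 'I_n.+1 -> R) i0 :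
  (forall i, f i <= 2^-1) -> f i0 < 2^-1 -> \sum_i f i < (n.+1)%:R / 2.
Proof.
move=> h hi; rewrite (bigD1 i0) //=.
have : \sum_(i | i != i0) f i <= \sum_(i | i != i0) (2^-1 : R) by apply: ler_sum => i _.
rewrite sumr_const => hs.
have c : #|[pred i : 'I_n.+1 | i != i0]| = n.
  by rewrite cardC1 card_ord.
rewrite c in hs.
have -> : (n.+1)%:R / 2 = (2^-1 : R) + 2^-1 *+ n by rewrite mulrC mulr_natr mulrS.
by apply: ltr_leD.
Qed.

Lemma finish_width (R : realType) n (v : 'I_n.+1 -> 'rV[int]_n) (u : 'rV[int]_n) (t : int) :
  full_dim v -> u != 0 -> (forall j, t <= dotI u (v j) <= t + 1) -> (exists j, dotI u (v j) = t) ->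
  (exists j, dotI u (v j) = t + 1) -> lattice_width_one (conv (R:=R) v).
Proof.
move=> fd u0 hb h1 h2; split.
  by exists u; split => //; apply: width_one_dir.
by move=> u' /(width_ge1 R fd).
Qed.

Unset Implicit Arguments.
Local Close Scope classical_set_scope.

Theorem corollary3p10 (R : realType) (n : nat) (v : 'I_n.+1 -> 'rV[int]_n) :
  (0 < n)%N -> full_dim v ->
  ( ((n.+1)%:R / 2 < mu R v \/
     (mu R v = (n.+1)%:R / 2 /\
      exists i, forall c b, facet_normal R v i c b -> dotZ c (vR R v i) - b%:~R != 2))
    -> lattice_pyramid R v )
  /\
  ( (n.+1)%:R / 2 <= mu R v ->
    ~ unimod_equiv (conv (R:=R) v) (conv (R:=R) (@two_delta n)) ->
    lattice_width_one (conv (R:=R) v) ).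
Proof.
move=> n0 fd.
have hex : forall i, exists cb : 'rV[int]_n * int, facet_normal R v i cb.1 cb.2.
  by move=> i; have [c [b h]] := normal_exists R i n0 fd; exists (c, b).
have [N hN] := boolp.choice hex.
have Apos : forall i, 0 < Aof v N i by move=> i; have /fnE [_ _ h] := hN i; rewrite subr_gt0.
have muE := mu_formula n0 fd hN.
have pyr : forall i, Aof v N i = 1 -> lattice_pyramid R v.
  move=> i h; exists i => c b hcb; have [-> ->] := normal_unique n0 fd (hN i) hcb.
  by rewrite dotZ_vR -intrB -/(Aof v N i) h.
have ge2 : ~ (exists i, Aof v N i = 1) -> forall i, 2 <= Aof v N i.
  move=> h i; have := Apos i; have : Aof v N i != 1 by apply/eqP => e; apply: h; exists i.
  lia.
have [[i1 hi1]|no1] := pselect (exists i, Aof v N i = 1).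
  split; first by move=> _; exact: pyr hi1.
  move=> _ _; pose c := (N i1).1; pose b := (N i1).2.
  have /fnE [_ hb hbi] := hN i1.
  have j0i : lift i1 (Ordinal n0) != i1 by rewrite eq_sym neq_lift.
  have vi : dotI c (v i1) = b + 1 by rewrite -hi1 /Aof addrC subrK.
  apply: (@finish_width R n v c b fd).
  - apply/negP => /eqP c0; have := Apos i1; rewrite /Aof -(hb _ j0i) -/c c0.
    by rewrite /dotI !big1 ?subrr ?ltxx // => k _; rewrite mxE mul0r.
  - move=> j; have [->|ji] := eqVneq j i1; first by rewrite vi lexx lerDl.
    by rewrite hb // lexx lerDl.
  - by exists (lift i1 (Ordinal n0)); rewrite hb.
  - by exists i1.
have g2 := ge2 no1.
have bound := sum_half (fun i => inv_le_half R (g2 i)).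
rewrite -muE in bound.
split.
  move=> [H|[H [i0 hi0]]]; first by exfalso; lra.
  exfalso.
  have ne2 : Aof v N i0 != 2.
    apply/eqP => e; have := hi0 _ _ (hN i0).
    by rewrite dotZ_vR -intrB -/(Aof v N i0) e eqxx.
  have g3 : 3 <= Aof v N i0 by have := g2 i0; lia.
  have := sum_half_lt (fun i => inv_le_half R (g2 i)) (inv_lt_half R g3).
  rewrite -muE; lra.
move=> H nU.
have all2 : forall i, Aof v N i = 2.
  move=> i0; apply/eqP; apply/negP => ne2.
  have g3 : 3 <= Aof v N i0 by have := g2 i0; lia.
  have := sum_half_lt (fun i => inv_le_half R (g2 i)) (inv_lt_half R g3).
  rewrite -muE; lra.
have [u [t [u0 hb h1 h2]]] := all2_case n0 fd hN all2 nU.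
exact: (@finish_width R n v u t fd u0 hb h1 h2).
Qed.
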